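(* For every positive integer $n$, $L(n+1) \ge L(n)$.
   Context: Given a finite multiset of $n$ rectangles (tiles), a rectangular layout is a tiling of a rectangle by all $n$ tiles (axis-parallel, no holes, no overlaps). Two layouts are counted as different if the resulting big rectangles have different perimeters. $L(n)$ denotes the maximum, over all choices of $n$ rectangular tiles, of the number of different rectangular layouts that can be formed using all the tiles. *)

(* Defs.v *)
From Stdlib Require Import Reals List Arith.
Import ListNotations.
Open Scope R_scope.

(* A tile is a rectangle given by its two side lengths (width, height). *)
Definition tile := (R * R)%type.

Definition valid_tiles (ts : list tile) : Prop :=
  Forall (fun t => 0 < fst t /\ 0 < snd t) ts.

Definition tw (ts : list tile) (rot : nat -> bool) (i : nat) : R :=
  let t := nth i ts (0, 0) in if rot i then snd t else fst t.
Definition th (ts : list tile) (rot : nat -> bool) (i : nat) : R :=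
  let t := nth i ts (0, 0) in if rot i then fst t else snd t.

Definition tiles_rectangle (ts : list tile) (W H : R) : Prop :=
  0 < W /\ 0 < H /\
  exists (rot : nat -> bool) (x y : nat -> R),
    (forall i, (i < length ts)%nat ->
        0 <= x i /\ x i + tw ts rot i <= W /\
        0 <= y i /\ y i + th ts rot i <= H) /\
    (forall i j, (i < length ts)%nat -> (j < length ts)%nat -> i <> j ->
       forall px py : R,
         ~ ((x i < px < x i + tw ts rot i /\ y i < py < y i + th ts rot i) /\
            (x j < px < x j + tw ts rot j /\ y j < py < y j + th ts rot j))) /\
    (forall px py : R, 0 <= px <= W -> 0 <= py <= H ->
       exists i, (i < length ts)%nat /\
         x i <= px <= x i + tw ts rot i /\ y i <= py <= y i + th ts rot i).

Definition layout_perimeter (ts : list tile) (p : R) : Prop :=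
  exists W H, tiles_rectangle ts W H /\ p = 2 * (W + H).

(* "L(n) >= k": some multiset of n tiles admits at least k rectangular
   layouts with pairwise different perimeters.  L(n) is the supremum of such
   k (in nat extended with infinity). *)
Definition L_ge (n k : nat) : Prop :=
  exists ts : list tile, length ts = n /\ valid_tiles ts /\
  exists ps : list R, length ps = k /\ NoDup ps /\
    Forall (layout_perimeter ts) ps.

(* Main.v *)
Require Import Defs.
From Stdlib Require Import Reals List Arith.
From Stdlib Require Import Lra Lia.
Import ListNotations.
Open Scope R_scope.

Definition fidx (i : nat) : nat :=
  match i with 0 => 0 | 1 => 0 | S (S j) => S j end%nat.

Lemma key (a b : R) (rest : list tile) (W H : R) :
  0 < a -> tiles_rectangle ((a,b)::rest) W H ->
  tiles_rectangle ((a/2,b)::(a/2,b)::rest) W H.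
Proof.
  intros Ha [HW [HH [rot [x [y [Hb [Hd Hc]]]]]]].
  split; [exact HW|split; [exact HH|]].
  set (ts' := (a/2,b)::(a/2,b)::rest).
  set (rot' := fun i => rot (fidx i)).
  set (x' := fun i => match i with 1%nat => if rot 0%nat then x 0%nat else x 0%nat + a/2
                                | _ => x (fidx i) end).
  set (y' := fun i => match i with 1%nat => if rot 0%nat then y 0%nat + a/2 else y 0%nat
                                | _ => y (fidx i) end).
  assert (Hsub : forall i, (i < length ts')%nat ->
    (fidx i < length ((a,b)::rest))%nat /\ x (fidx i) <= x' i /\
    x' i + tw ts' rot' i <= x (fidx i) + tw ((a,b)::rest) rot (fidx i) /\
    y (fidx i) <= y' i /\
    y' i + th ts' rot' i <= y (fidx i) + th ((a,b)::rest) rot (fidx i)).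
  { intros [|[|j]] Hi; unfold tw, th, ts', rot', x', y'; simpl in *.
    - destruct (rot 0%nat); repeat split; try lia; lra.
    - destruct (rot 0%nat); repeat split; try lia; lra.
    - repeat split; try lia; lra. }
  exists rot', x', y'.
  split; [|split].
  - intros i Hi. destruct (Hsub i Hi) as [Hf [H1 [H2 [H3 H4]]]].
    destruct (Hb _ Hf) as [B1 [B2 [B3 B4]]]. repeat split; lra.
  - intros i j Hi Hj Hij px py [[Pi1 Pi2] [Pj1 Pj2]].
    destruct (Nat.eq_dec (fidx i) (fidx j)) as [E|E].
    + assert (Hij2 : (i = 0 /\ j = 1 \/ i = 1 /\ j = 0)%nat).
      { destruct i as [|[|i]]; destruct j as [|[|j]]; simpl in E; try lia. }
      destruct Hij2 as [[-> ->]|[-> ->]]; unfold tw, th, ts', rot', x', y' in *;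
        simpl in *; destruct (rot 0%nat); lra.
    + destruct (Hsub i Hi) as [Hf [H1 [H2 [H3 H4]]]].
      destruct (Hsub j Hj) as [Gf [G1 [G2 [G3 G4]]]].
      apply (Hd _ _ Hf Gf E px py). repeat split; lra.
  - intros px py Px Py. destruct (Hc px py Px Py) as [j [Hj [Q1 Q2]]].
    destruct j as [|j].
    + unfold tw, th in Q1, Q2; simpl in Q1, Q2.
      destruct (rot 0%nat) eqn:Er.
      * destruct (Rle_lt_dec py (y 0%nat + a/2)).
        -- exists 0%nat. unfold tw, th, ts', rot', x', y'; simpl; rewrite Er.
           repeat split; simpl; try lia; lra.
        -- exists 1%nat. unfold tw, th, ts', rot', x', y'; simpl; rewrite Er.
           repeat split; simpl; try lia; lra.
      * destruct (Rle_lt_dec px (x 0%nat + a/2)).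
        -- exists 0%nat. unfold tw, th, ts', rot', x', y'; simpl; rewrite Er.
           repeat split; simpl; try lia; lra.
        -- exists 1%nat. unfold tw, th, ts', rot', x', y'; simpl; rewrite Er.
           repeat split; simpl; try lia; lra.
    + exists (S (S j)). unfold tw, th, ts', rot', x', y' in *; simpl in *.
      repeat split; try lia; lra.
Qed.

Theorem mainTheorem5 : forall n : nat, (0 < n)%nat ->
  forall k : nat, L_ge n k -> L_ge (S n) k.
Proof.
  intros n Hn k [ts [Hlen [Hval [ps [Hps [Hnd Hall]]]]]].
  destruct ts as [|[a b] rest]; [simpl in Hlen; lia|].
  pose proof (Forall_inv Hval) as Ht. pose proof (Forall_inv_tail Hval) as Hrest. simpl in Ht.
  exists ((a/2,b)::(a/2,b)::rest). split; [simpl in *; lia|]. split.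
  - constructor; [simpl; lra|]. constructor; [simpl; lra|exact Hrest].
  - exists ps. split; [exact Hps|split; [exact Hnd|]].
    eapply Forall_impl; [|exact Hall].
    intros p [W [H [HT Hp]]]. exists W, H. split; [apply key; [lra|exact HT]|exact Hp].
Qed.
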